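(* Let $K\subset\mathbb{R}^d$ be compact, let $f:K\to\mathbb{R}$ be continuous and let $\varepsilon>0$. Then there exists a two-layer Morph-Net $N:\mathbb{R}^d\to\mathbb{R}$ (which may be taken to use dilation neurons only) such that $\sup_{{\bm{x}}\in K}|f({\bm{x}})-N({\bm{x}})|<\varepsilon$.
   Context: For ${\bm{x}}\in\mathbb{R}^p$ write ${\bm{x}}'=(x_1,\dots,x_p,0)\in\mathbb{R}^{p+1}$ (augmented input). For a structuring element ${\bm{s}}\in\mathbb{R}^{p+1}$, the dilation neuron computes ${\bm{x}}\oplus{\bm{s}}=\max_{1\le k\le p+1}(x'_k+s_k)$ and the erosion neuron computes ${\bm{x}}\ominus{\bm{s}}=\min_{1\le k\le p+1}(x'_k-s_k)$. A dilation-erosion layer applied to ${\bm{y}}\in\mathbb{R}^p$ consists of finitely many dilation and erosion neurons (each with its own structuring element in $\mathbb{R}^{p+1}$) all applied to ${\bm{y}}$, and outputs the vector of their values. A linear combination layer is an affine map ${\bm{z}}\mapsto A{\bm{z}}+{\bm{c}}$. A two-layer Morph-Net $N:\mathbb{R}^d\to\mathbb{R}$ is the composition: dilation-erosion layer on ${\bm{x}}\in\mathbb{R}^d$, then a linear combination layer, then a second dilation-erosion layer applied to the resulting vector, then a linear combination layer with a single real output. *)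

(* Defs.v *)
From Stdlib Require Import Reals Lra Lia List.
Open Scope R_scope.

(* A vector of R^p is represented by a function nat -> R whose meaningful
   coordinates are 0, ..., p-1 (coordinate k+1 of the paper = index k). *)
Definition vec := nat -> R.

Fixpoint fsum (n : nat) (g : nat -> R) : R :=
  match n with
  | O => 0
  | S n' => fsum n' g + g n'
  end.

(* max / min over k = 0 .. n (n+1 entries) *)
Fixpoint maxk (g : nat -> R) (n : nat) : R :=
  match n with
  | O => g O
  | S n' => Rmax (maxk g n') (g (S n'))
  end.
Fixpoint mink (g : nat -> R) (n : nat) : R :=
  match n with
  | O => g O
  | S n' => Rmin (mink g n') (g (S n'))
  end.

(* augmented input x' = (x_1, ..., x_p, 0) in R^{p+1} *)
Definition aug (p : nat) (x : vec) : vec :=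
  fun k => if Nat.ltb k p then x k else 0.

Definition dilation (p : nat) (x s : vec) : R :=
  maxk (fun k => aug p x k + s k) p.
Definition erosion (p : nat) (x s : vec) : R :=
  mink (fun k => aug p x k - s k) p.

Record neuron := mkNeuron { is_dilation : bool ; selem : vec }.

Definition neuron_eval (p : nat) (nu : neuron) (x : vec) : R :=
  if is_dilation nu then dilation p x (selem nu) else erosion p x (selem nu).

Definition de_layer (p : nat) (ns : nat -> neuron) (x : vec) : vec :=
  fun j => neuron_eval p (ns j) x.

Definition lin_layer (n : nat) (A : nat -> nat -> R) (c : vec) (z : vec) : vec :=
  fun i => fsum n (fun j => A i j * z j) + c i.

(* two-layer Morph-Net R^d -> R:
   DE layer (n1 neurons on R^d), affine R^n1 -> R^m, DE layer (n2 neurons on R^m),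
   affine R^n2 -> R. *)
Record MorphNet2 := mkMorphNet2 {
  mn_n1 : nat ; mn_L1 : nat -> neuron ;
  mn_m : nat ; mn_A : nat -> nat -> R ; mn_c : vec ;
  mn_n2 : nat ; mn_L2 : nat -> neuron ;
  mn_w : vec ; mn_b : R }.

Definition morphnet_eval (d : nat) (N : MorphNet2) (x : vec) : R :=
  let z := de_layer d (mn_L1 N) x in
  let y := lin_layer (mn_n1 N) (mn_A N) (mn_c N) z in
  let u := de_layer (mn_m N) (mn_L2 N) y in
  fsum (mn_n2 N) (fun j => mn_w N j * u j) + mn_b N.

Definition dilation_only (N : MorphNet2) : Prop :=
  (forall j, (j < mn_n1 N)%nat -> is_dilation (mn_L1 N j) = true) /\
  (forall j, (j < mn_n2 N)%nat -> is_dilation (mn_L2 N j) = true).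

Definition dist (d : nat) (x y : vec) : R :=
  sqrt (fsum d (fun k => (x k - y k) ^ 2)).

Definition open_set (d : nat) (U : vec -> Prop) : Prop :=
  forall x, U x -> exists r, r > 0 /\ forall y, dist d x y < r -> U y.

(* R^d embedded: coordinates >= d vanish *)
Definition in_Rd (d : nat) (x : vec) : Prop := forall k, (d <= k)%nat -> x k = 0.

Definition compact_set (d : nat) (K : vec -> Prop) : Prop :=
  forall (I : Type) (U : I -> vec -> Prop),
    (forall i, open_set d (U i)) ->
    (forall x, K x -> exists i, U i x) ->
    exists l : list I, forall x, K x -> exists i, In i l /\ U i x.

(* continuity of f on K (i.e. of the restriction f : K -> R) *)
Definition continuous_on (d : nat) (K : vec -> Prop) (f : vec -> R) : Prop :=
  forall x, K x -> forall e, e > 0 -> exists delta, delta > 0 /\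
    forall y, K y -> dist d x y < delta -> Rabs (f x - f y) < e.

(* Main.v *)
Require Import Defs.
From Stdlib Require Import Reals Lra Lia List.
Open Scope R_scope.

Ltac rmx := unfold Rmax, Rmin in *; repeat (destruct Rle_dec); try lra.

Lemma fsum_ext n g h : (forall k, (k < n)%nat -> g k = h k) -> fsum n g = fsum n h.
Proof. induction n; simpl; intros H; auto. rewrite IHn by (intros; apply H; lia). rewrite H by lia. auto. Qed.
Lemma fsum_plus n g h : fsum n (fun k => g k + h k) = fsum n g + fsum n h.
Proof. induction n; simpl; [lra|rewrite IHn; lra]. Qed.
Lemma fsum_scale n c g : fsum n (fun k => c * g k) = c * fsum n g.
Proof. induction n; simpl; [lra|rewrite IHn; lra]. Qed.
Lemma fsum_zero n : fsum n (fun _ => 0) = 0.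
Proof. induction n; simpl; [lra|rewrite IHn; lra]. Qed.
Lemma fsum_delta n k x : (k < n)%nat ->
  fsum n (fun j => (if Nat.eqb j k then 1 else 0) * x j) = x k.
Proof.
  induction n; intros H; [lia|]. simpl.
  destruct (Nat.eqb n k) eqn:E.
  - apply Nat.eqb_eq in E; subst.
    rewrite (fsum_ext _ _ (fun _ => 0)). rewrite fsum_zero; lra.
    intros j Hj. destruct (Nat.eqb j k) eqn:E2; [apply Nat.eqb_eq in E2; lia| lra].
  - apply Nat.eqb_neq in E. rewrite IHn by lia. lra.
Qed.
Lemma fsum_le_const n g c : (forall k, (k < n)%nat -> g k <= c) -> fsum n g <= INR n * c.
Proof.
  induction n; intros H; [simpl; lra|]. change (fsum (S n) g) with (fsum n g + g n). rewrite S_INR.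
  assert (fsum n g <= INR n * c) by (apply IHn; intros; apply H; lia).
  assert (g n <= c) by (apply H; lia). lra.
Qed.
Lemma fsum_ge_term n g k : (forall j, 0 <= g j) -> (k < n)%nat -> g k <= fsum n g.
Proof.
  induction n; simpl; intros H Hk; [lia|].
  assert (0 <= fsum n g).
  { clear IHn Hk. induction n; simpl; [lra|]. specialize (H n). lra. }
  destruct (Nat.eq_dec k n); [subst; lra|]. assert (g k <= fsum n g) by (apply IHn; auto; lia).
  specialize (H n). lra.
Qed.
Lemma fsum_abs_bound n a x R : (forall j, (j < n)%nat -> Rabs (x j) <= R) ->
  Rabs (fsum n (fun j => a j * x j)) <= fsum n (fun j => Rabs (a j)) * R.
Proof.
  induction n; simpl; intros H. rewrite Rabs_R0; lra.
  eapply Rle_trans; [apply Rabs_triang|]. rewrite Rabs_mult.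
  assert (Rabs (x n) <= R) by (apply H; lia).
  assert (Rabs (a n) * Rabs (x n) <= Rabs (a n) * R) by (apply Rmult_le_compat_l; auto; apply Rabs_pos).
  assert (Rabs (fsum n (fun j => a j * x j)) <= fsum n (fun j => Rabs (a j)) * R) by (apply IHn; intros; apply H; lia).
  lra.
Qed.

Lemma maxk_ge g n k : (k <= n)%nat -> g k <= maxk g n.
Proof.
  induction n; simpl; intros H. replace k with O by lia; lra.
  destruct (Nat.eq_dec k (S n)). subst; apply Rmax_r.
  eapply Rle_trans; [apply IHn; lia| apply Rmax_l].
Qed.
Lemma maxk_le g n v : (forall k, (k <= n)%nat -> g k <= v) -> maxk g n <= v.
Proof.
  induction n; simpl; intros H. apply H; lia.
  apply Rmax_lub; [apply IHn; intros; apply H; lia| apply H; lia].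
Qed.
Lemma maxk_char g n v : (forall k, (k <= n)%nat -> g k <= v) ->
  (exists k, (k <= n)%nat /\ g k = v) -> maxk g n = v.
Proof.
  intros H [k [Hk E]]. apply Rle_antisym. apply maxk_le; auto.
  rewrite <- E. apply maxk_ge; auto.
Qed.

Fixpoint nrm (n : nat) (x p : vec) : R :=
  match n with O => 0 | S n' => Rmax (nrm n' x p) (Rabs (x n' - p n')) end.
Lemma nrm_nonneg n x p : 0 <= nrm n x p.
Proof. induction n; simpl; [lra|]. eapply Rle_trans; [apply IHn|apply Rmax_l]. Qed.
Lemma nrm_ge n x p k : (k < n)%nat -> Rabs (x k - p k) <= nrm n x p.
Proof.
  induction n; simpl; intros H; [lia|].
  destruct (Nat.eq_dec k n). subst; apply Rmax_r.
  eapply Rle_trans; [apply IHn; lia| apply Rmax_l].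
Qed.
Lemma nrm_le n x p S : 0 <= S -> (forall k, (k < n)%nat -> Rabs (x k - p k) <= S) -> nrm n x p <= S.
Proof.
  induction n; simpl; intros H0 H; [lra|].
  apply Rmax_lub; [apply IHn; auto; intros; apply H; lia| apply H; lia].
Qed.
Lemma nrm_tri n x y p : nrm n y p <= nrm n x p + nrm n y x.
Proof.
  apply nrm_le. pose proof (nrm_nonneg n x p); pose proof (nrm_nonneg n y x); lra.
  intros k Hk. pose proof (nrm_ge n x p k Hk); pose proof (nrm_ge n y x k Hk).
  replace (y k - p k) with ((x k - p k) + (y k - x k)) by ring.
  eapply Rle_trans; [apply Rabs_triang|lra].
Qed.
Lemma coord_le_dist n x y k : (k < n)%nat -> Rabs (x k - y k) <= Defs.dist n x y.
Proof.
  intros Hk. unfold Defs.dist. rewrite <- (sqrt_pow2 (Rabs (x k - y k))) by apply Rabs_pos.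
  apply sqrt_le_1_alt. rewrite pow2_abs.
  apply (fsum_ge_term n (fun k => (x k - y k)^2)); auto. intros; apply pow2_ge_0.
Qed.
Lemma nrm_le_dist n x y : nrm n y x <= Defs.dist n x y.
Proof.
  apply nrm_le. unfold Defs.dist; apply sqrt_pos.
  intros k Hk. rewrite Rabs_minus_sym. apply coord_le_dist; auto.
Qed.
Lemma dist_small n p y delta : delta > 0 -> nrm n y p < delta / (INR n + 1) -> Defs.dist n p y < delta.
Proof.
  intros Hd H. set (t := nrm n y p) in *. pose proof (nrm_nonneg n y p) as Ht. fold t in Ht.
  pose proof (pos_INR n) as Hn.
  assert (Htd : t * (INR n + 1) < delta).
  { assert (E: delta / (INR n + 1) * (INR n + 1) = delta) by (field; lra).
    pose proof (Rmult_lt_compat_r (INR n + 1) _ _ ltac:(lra) H) as H0. rewrite E in H0. lra. }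
  unfold Defs.dist. rewrite <- (sqrt_pow2 delta) by lra. apply sqrt_lt_1_alt. split.
  - clear. induction n; [simpl; lra|]. change (fsum (S n) ?g) with (fsum n g + g n).
    pose proof (pow2_ge_0 (p n - y n)); lra.
  - eapply Rle_lt_trans. apply (fsum_le_const n _ (t^2)).
    intros k Hk. rewrite <- pow2_abs. rewrite Rabs_minus_sym.
    pose proof (nrm_ge n y p k Hk). pose proof (Rabs_pos (y k - p k)). fold t in H0. apply pow_incr; lra.
    assert (0 <= t * (INR n + 1)) by nra.
    assert ((t * (INR n + 1))^2 < delta^2) by (simpl; nra).
    assert (INR n * t^2 <= (t * (INR n + 1))^2) by (simpl; nra). lra.
Qed.
Section S2.
Variable d : nat.
Definition is_aff (g : vec -> R) : Prop :=
  exists a b, forall x, g x = fsum d (fun k => a k * x k) + b.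
Lemma aff_const c : is_aff (fun _ => c).
Proof. exists (fun _ => 0), c. intros x. rewrite (fsum_ext _ _ (fun _ => 0)); [rewrite fsum_zero; lra|intros; lra]. Qed.
Lemma aff_coord k : (k < d)%nat -> is_aff (fun x => x k).
Proof. intros Hk. exists (fun j => if Nat.eqb j k then 1 else 0), 0. intros x. rewrite fsum_delta; auto; lra. Qed.
Lemma aff_plus g h : is_aff g -> is_aff h -> is_aff (fun x => g x + h x).
Proof.
  intros [a [b Hg]] [a' [b' Hh]]. exists (fun k => a k + a' k), (b + b'). intros x.
  rewrite Hg, Hh. rewrite (fsum_ext _ (fun k => (a k + a' k) * x k) (fun k => a k * x k + a' k * x k)) by (intros; ring).
  rewrite fsum_plus. ring.
Qed.
Lemma aff_scale c g : is_aff g -> is_aff (fun x => c * g x).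
Proof.
  intros [a [b Hg]]. exists (fun k => c * a k), (c * b). intros x. rewrite Hg.
  rewrite (fsum_ext _ (fun k => c * a k * x k) (fun k => c * (a k * x k))) by (intros; ring). rewrite fsum_scale. ring.
Qed.

Definition MA (g : vec -> R) : Prop :=
  exists l : list (vec -> R), l <> nil /\ (forall h, In h l -> is_aff h) /\
    forall x, (forall h, In h l -> h x <= g x) /\ exists h, In h l /\ h x = g x.

Lemma MA_ext g g' : MA g -> (forall x, g x = g' x) -> MA g'.
Proof.
  intros [l [Hn [Ha H]]] E. exists l. split; auto. split; auto. intros x.
  destruct (H x) as [H1 [h [Hi Hh]]]. rewrite <- E. split; eauto.
Qed.
Lemma MA_aff g : is_aff g -> MA g.
Proof.
  intros Ha. exists (g :: nil). split; [discriminate|]. split.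
  intros h [<-|[]]; auto. intros x. split. intros h [<-|[]]; lra. exists g; split; [left|]; auto.
Qed.
Lemma MA_max g1 g2 : MA g1 -> MA g2 -> MA (fun x => Rmax (g1 x) (g2 x)).
Proof.
  intros [l1 [Hn1 [Ha1 H1]]] [l2 [Hn2 [Ha2 H2]]]. exists (l1 ++ l2). split.
  destruct l1; [congruence|discriminate]. split.
  intros h Hi; apply in_app_or in Hi; destruct Hi; auto.
  intros x. destruct (H1 x) as [U1 [h1 [I1 E1]]]. destruct (H2 x) as [U2 [h2 [I2 E2]]]. split.
  - intros h Hi; apply in_app_or in Hi; destruct Hi as [Hi|Hi].
    eapply Rle_trans; [apply U1; auto| apply Rmax_l].
    eapply Rle_trans; [apply U2; auto| apply Rmax_r].
  - unfold Rmax. destruct Rle_dec.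
    exists h2; split; auto; apply in_or_app; auto.
    exists h1; split; auto; apply in_or_app; auto.
Qed.
Lemma MA_plus g1 g2 : MA g1 -> MA g2 -> MA (fun x => g1 x + g2 x).
Proof.
  intros [l1 [Hn1 [Ha1 H1]]] [l2 [Hn2 [Ha2 H2]]].
  exists (flat_map (fun h1 => map (fun h2 x => h1 x + h2 x) l2) l1). split.
  destruct l1 as [|a1 t1]; [congruence|]. destruct l2 as [|a2 t2]; [congruence|]. simpl. discriminate.
  split.
  - intros h Hi. apply in_flat_map in Hi. destruct Hi as [h1 [I1 Hi]]. apply in_map_iff in Hi.
    destruct Hi as [h2 [<- I2]]. apply aff_plus; auto.
  - intros x. destruct (H1 x) as [U1 [h1 [I1 E1]]]. destruct (H2 x) as [U2 [h2 [I2 E2]]]. split.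
    + intros h Hi. apply in_flat_map in Hi. destruct Hi as [k1 [J1 Hi]]. apply in_map_iff in Hi.
      destruct Hi as [k2 [<- J2]]. specialize (U1 k1 J1); specialize (U2 k2 J2); lra.
    + exists (fun x => h1 x + h2 x). split; [|lra]. apply in_flat_map. exists h1; split; auto.
      apply in_map_iff. exists h2; auto.
Qed.
Lemma MA_scale c g : 0 <= c -> MA g -> MA (fun x => c * g x).
Proof.
  intros Hc [l [Hn [Ha H]]]. exists (map (fun h x => c * h x) l). split.
  destruct l; [congruence|discriminate]. split.
  - intros h Hi. apply in_map_iff in Hi. destruct Hi as [h' [<- I]]. apply aff_scale; auto.
  - intros x. destruct (H x) as [U [h [I E]]]. split.
    + intros h' Hi. apply in_map_iff in Hi. destruct Hi as [h'' [<- I']].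
      apply Rmult_le_compat_l; auto.
    + exists (fun x => c * h x). split; [|rewrite E; auto]. apply in_map_iff. exists h; auto.
Qed.
Lemma MA_const c : MA (fun _ => c).
Proof. apply MA_aff, aff_const. Qed.

Lemma MA_nrm p : forall n, (n <= d)%nat -> MA (fun x => nrm n x p).
Proof.
  induction n; intros Hn. apply (MA_const 0).
  simpl. apply MA_max. apply IHn; lia.
  apply (MA_ext (fun x => Rmax (x n + (- p n)) (-1 * x n + p n))).
  apply MA_max; apply MA_aff; apply aff_plus; try apply aff_const.
  apply aff_coord; lia. apply aff_scale, aff_coord; lia.
  intros x. unfold Rabs, Rmax. repeat destruct Rle_dec; repeat destruct Rcase_abs; lra.
Qed.

Definition DC (g : vec -> R) : Prop :=
  exists G H, MA G /\ MA H /\ forall x, g x = G x - H x.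
Lemma DC_max g1 g2 : DC g1 -> DC g2 -> DC (fun x => Rmax (g1 x) (g2 x)).
Proof.
  intros [G1 [H1 [A1 [B1 E1]]]] [G2 [H2 [A2 [B2 E2]]]].
  exists (fun x => Rmax (G1 x + H2 x) (G2 x + H1 x)), (fun x => H1 x + H2 x).
  split. apply MA_max; apply MA_plus; auto. split. apply MA_plus; auto.
  intros x. rewrite E1, E2. unfold Rmax. repeat destruct Rle_dec; lra.
Qed.
Lemma DC_const c : DC (fun _ => c).
Proof. exists (fun _ => c), (fun _ => 0). split; [apply MA_const|]. split; [apply MA_const|]. intros; lra. Qed.
End S2.
Lemma Rabs_le_inv a b : Rabs a <= b -> -b <= a <= b.
Proof. unfold Rabs; destruct Rcase_abs; intros; lra. Qed.
Lemma aff_list d : forall l, (forall h, In h l -> is_aff d h) -> exists (A : nat -> nat -> R) (c : vec),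
  forall i x, (i < length l)%nat -> nth i l (fun _ => 0) x = fsum d (fun j => A i j * x j) + c i.
Proof.
  induction l as [|h t IH]; intros Ha.
  - exists (fun _ _ => 0), (fun _ => 0). simpl; intros; lia.
  - destruct (Ha h (or_introl eq_refl)) as [a [b Hh]].
    destruct IH as [A [c HA]]. intros; apply Ha; right; auto.
    exists (fun i => match i with O => a | S i' => A i' end), (fun i => match i with O => b | S i' => c i' end).
    intros [|i] x Hi; simpl. apply Hh. apply HA. simpl in Hi; lia.
Qed.

Lemma nat_bound (P : nat -> R -> Prop) m : (forall i B B', B <= B' -> P i B -> P i B') ->
  (forall i, (i < m)%nat -> exists B, P i B) -> exists B, forall i, (i < m)%nat -> P i B.
Proof.
  intros Hm. induction m; intros H. exists 0; intros; lia.
  destruct IHm as [B1 H1]. intros; apply H; lia. destruct (H m) as [B2 H2]. lia.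
  exists (Rmax B1 B2). intros i Hi. destruct (Nat.eq_dec i m). subst. eapply Hm; [apply Rmax_r|auto].
  eapply Hm; [apply Rmax_l| apply H1; lia].
Qed.

Lemma realize d (K : vec -> Prop) R F : (forall x, K x -> forall k, (k < d)%nat -> Rabs (x k) <= R) ->
  DC d F -> exists N, dilation_only N /\ forall x, K x -> morphnet_eval d N x = F x.
Proof.
  intros HR [G [H [[lG [nG [aG HG]]] [[lH [nH [aH HH]]] EF]]]].
  set (L := lG ++ lH).
  assert (aL : forall h, In h L -> is_aff d h).
  { intros h Hi. apply in_app_or in Hi. destruct Hi; auto. }
  destruct (aff_list d L aL) as [A [c HA]].
  set (m := length L). set (g := length lG).
  assert (Hm : m = (g + length lH)%nat) by (unfold m, L, g; apply length_app).
  destruct (nat_bound (fun i B => forall x, K x -> Rabs (fsum d (fun j => A i j * x j) + c i) <= B) m)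
    as [Bd HB].
  { intros i B B' HBB P x Hx. specialize (P x Hx). lra. }
  { intros i Hi. exists (fsum d (fun j => Rabs (A i j)) * R + Rabs (c i)). intros x Hx.
    eapply Rle_trans; [apply Rabs_triang|]. pose proof (fsum_abs_bound d (A i) x R (HR x Hx)). lra. }
  set (M1 := 2 * R + 1). set (M2 := 2 * Rabs Bd + 1).
  set (s1 := fun j : nat => (fun k => if Nat.eqb k j then 0 else - M1) : vec).
  set (s0 := (fun k => if Nat.ltb k g then 0 else - M2) : vec).
  set (s2 := (fun k => if Nat.ltb k g then - M2 else if Nat.ltb k m then 0 else - M2) : vec).
  exists (mkMorphNet2 d (fun j => mkNeuron true (s1 j)) m A c 2
            (fun j => if Nat.eqb j 0 then mkNeuron true s0 else mkNeuron true s2)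
            (fun j => if Nat.eqb j 0 then 1 else -1) 0).
  split. { split; simpl; intros j _; auto. destruct (Nat.eqb j 0); auto. }
  intros x Hx.
  assert (Hz : forall j, (j < d)%nat -> de_layer d (fun j => mkNeuron true (s1 j)) x j = x j).
  { intros j Hj. unfold de_layer, neuron_eval; simpl. unfold dilation. apply maxk_char.
    - intros k Hk. unfold aug, s1. pose proof (HR x Hx j Hj). pose proof (Rabs_pos (x j)).
      destruct (Nat.eqb k j) eqn:E.
      + apply Nat.eqb_eq in E; subst. rewrite (proj2 (Nat.ltb_lt j d) Hj). lra.
      + destruct (Nat.ltb k d) eqn:E2.
        * apply Nat.ltb_lt in E2. pose proof (HR x Hx k E2).
          unfold M1. apply Rabs_le_inv in H0. apply Rabs_le_inv in H2. lra.
        * unfold M1. apply Rabs_le_inv in H0. lra.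
    - exists j. split; [lia|]. unfold aug, s1. rewrite Nat.eqb_refl, (proj2 (Nat.ltb_lt j d) Hj). lra. }
  set (z := de_layer d (fun j => mkNeuron true (s1 j)) x).
  set (y := lin_layer d A c z).
  assert (Hy : forall i, (i < m)%nat -> y i = nth i L (fun _ => 0) x).
  { intros i Hi. rewrite HA by auto. unfold y, lin_layer. f_equal. apply fsum_ext.
    intros j Hj. unfold z. rewrite Hz; auto. }
  assert (HyB : forall i, (i < m)%nat -> Rabs (y i) <= Rabs Bd).
  { intros i Hi. rewrite Hy, HA by auto. eapply Rle_trans; [apply HB; auto| apply RRle_abs]. }
  pose proof (Rabs_pos Bd) as HBd0.
  assert (HyL : forall i, (i < g)%nat -> nth i lG (fun _ => 0) x = y i).
  { intros i Hi. rewrite Hy by lia. unfold L. rewrite app_nth1; auto. }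
  assert (HyR : forall i, (i < length lH)%nat -> nth i lH (fun _ => 0) x = y (g + i)%nat).
  { intros i Hi. rewrite Hy by lia. unfold L. rewrite app_nth2 by lia. f_equal. f_equal. lia. }
  destruct (HG x) as [UG [hG [IG EG]]]. destruct (HH x) as [UH [hH [IH EH]]].
  destruct (In_nth _ _ (fun _ => 0) IG) as [iG [LiG NiG]].
  destruct (In_nth _ _ (fun _ => 0) IH) as [iH [LiH NiH]].
  assert (GB : - Rabs Bd <= G x).
  { rewrite <- EG, <- NiG, HyL by auto. pose proof (HyB iG ltac:(lia)). apply Rabs_le_inv in H0. lra. }
  assert (HB' : - Rabs Bd <= H x).
  { rewrite <- EH, <- NiH, HyR by auto. pose proof (HyB (g+iH)%nat ltac:(lia)). apply Rabs_le_inv in H0. lra. }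
  assert (U0 : dilation m y s0 = G x).
  { unfold dilation. apply maxk_char.
    - intros k Hk. unfold aug, s0. destruct (Nat.ltb k g) eqn:E.
      + apply Nat.ltb_lt in E. rewrite (proj2 (Nat.ltb_lt k m)) by lia. rewrite <- HyL by auto.
        rewrite Rplus_0_r. apply UG. apply nth_In. lia.
      + unfold M2. destruct (Nat.ltb k m) eqn:E2.
        * apply Nat.ltb_lt in E2. pose proof (HyB k E2). apply Rabs_le_inv in H0. lra.
        * lra.
    - exists iG. split; [lia|]. unfold aug, s0. rewrite (proj2 (Nat.ltb_lt iG g)) by lia.
      rewrite (proj2 (Nat.ltb_lt iG m)) by lia. rewrite <- HyL, NiG by auto. lra. }
  assert (U1 : dilation m y s2 = H x).
  { unfold dilation. apply maxk_char.
    - intros k Hk. unfold aug, s2. destruct (Nat.ltb k g) eqn:E.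
      + apply Nat.ltb_lt in E. rewrite (proj2 (Nat.ltb_lt k m)) by lia.
        pose proof (HyB k ltac:(lia)). apply Rabs_le_inv in H0. unfold M2. lra.
      + apply Nat.ltb_ge in E. destruct (Nat.ltb k m) eqn:E2.
        * apply Nat.ltb_lt in E2. replace k with (g + (k - g))%nat by lia. rewrite <- HyR by lia.
          rewrite Rplus_0_r. apply UH. apply nth_In. lia.
        * unfold M2. lra.
    - exists (g + iH)%nat. split; [lia|]. unfold aug, s2.
      rewrite (proj2 (Nat.ltb_ge (g + iH) g)) by lia.
      rewrite (proj2 (Nat.ltb_lt (g + iH) m)) by lia. rewrite <- HyR, NiH by auto. lra. }
  unfold morphnet_eval. simpl. unfold de_layer, neuron_eval. simpl.
  change (0 + 1 * dilation m y s0 + -1 * dilation m y s2 + 0 = F x). rewrite U0, U1, EF. lra.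
Qed.
Definition rho (d : nat) (q : vec * R) : R := snd q / (2 * (INR d + 1)).
Definition phi d (f : vec -> R) e C (q : vec * R) (x : vec) : R :=
  f (fst q) - e - C * Rmax 0 (nrm d x (fst q) - rho d q).
Fixpoint Fl d f e C B0 (l : list (vec * R)) (x : vec) : R :=
  match l with nil => B0 | q :: t => Rmax (phi d f e C q x) (Fl d f e C B0 t x) end.

Lemma rho_pos d q : snd q > 0 -> rho d q > 0.
Proof. intros H. unfold rho. pose proof (pos_INR d). apply Rdiv_lt_0_compat; lra. Qed.

Lemma DC_phi d f e C q : 0 <= C -> DC d (phi d f e C q).
Proof.
  intros HC. exists (fun _ => f (fst q) - e), (fun x => C * Rmax 0 (nrm d x (fst q) + - rho d q)).
  split. apply MA_const. split.
  apply MA_scale; auto. apply (MA_max d (fun _ => 0)). apply MA_const.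
  apply MA_plus. apply MA_nrm; lia. apply MA_const.
  intros x. unfold phi; cbv beta. replace (nrm d x (fst q) + - rho d q) with (nrm d x (fst q) - rho d q) by ring. ring.
Qed.
Lemma DC_Fl d f e C B0 l : 0 <= C -> DC d (Fl d f e C B0 l).
Proof.
  intros HC. induction l as [|q t IH]. apply DC_const.
  exact (DC_max d _ _ (DC_phi d f e C q HC) IH).
Qed.
Lemma Fl_ge d f e C B0 l q x : In q l -> phi d f e C q x <= Fl d f e C B0 l x.
Proof.
  induction l as [|q' t IH]; simpl; intros Hi; [destruct Hi|]. destruct Hi as [<-|Hi].
  apply Rmax_l. eapply Rle_trans; [apply IH; auto| apply Rmax_r].
Qed.
Lemma Fl_le d f e C B0 l x v : (forall q, In q l -> phi d f e C q x <= v) -> B0 <= v -> Fl d f e C B0 l x <= v.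
Proof.
  induction l as [|q t IH]; simpl; intros H H0; auto. apply Rmax_lub; auto.
Qed.

Lemma list_bound {A : Type} (P : A -> R -> Prop) l : (forall a B B', B <= B' -> P a B -> P a B') ->
  (forall a, In a l -> exists B, P a B) -> exists B, forall a, In a l -> P a B.
Proof.
  intros Hm. induction l as [|a t IH]; intros H. exists 0; intros _ [].
  destruct IH as [B1 H1]. intros; apply H; right; auto. destruct (H a) as [B2 H2]. left; auto.
  exists (Rmax B1 B2). intros a' [<-|Hi]. eapply Hm; [apply Rmax_r|auto].
  eapply Hm; [apply Rmax_l| apply H1; auto].
Qed.
Lemma list_min_pos {A : Type} (g : A -> R) l : (forall a, In a l -> g a > 0) ->
  exists r, r > 0 /\ forall a, In a l -> r <= g a.
Proof.
  induction l as [|a t IH]; intros H. exists 1; split; [lra|intros _ []].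
  destruct IH as [r [Hr H1]]. intros; apply H; right; auto.
  pose proof (H a (or_introl eq_refl)).
  exists (Rmin r (g a)). split. unfold Rmin; destruct Rle_dec; lra.
  intros a' [<-|Hi]. apply Rmin_r. eapply Rle_trans; [apply Rmin_l| apply H1; auto].
Qed.

Lemma nrm_self n x : nrm n x x = 0.
Proof.
  apply Rle_antisym; [|apply nrm_nonneg]. apply nrm_le. lra. intros. unfold Rminus; rewrite Rplus_opp_r, Rabs_R0; lra.
Qed.

Theorem mainTheorem4 (d : nat) (K : vec -> Prop) (f : vec -> R) (eps : R)
  (HKd : forall x, K x -> in_Rd d x)
  (HK : compact_set d K)
  (Hf : continuous_on d K f)
  (Heps : eps > 0) :
  exists N : MorphNet2, dilation_only N /\
    exists s, s < eps /\
      forall x, K x -> Rabs (f x - morphnet_eval d N x) <= s.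
Proof.
  set (e := eps / 3). assert (He : e > 0) by (unfold e; lra).
  set (Good := fun q : vec * R => K (fst q) /\ snd q > 0 /\
      forall y, K y -> Defs.dist d (fst q) y < snd q -> Rabs (f (fst q) - f y) < e).
  set (I := {q : vec * R | Good q}).
  set (U := fun (i : I) (z : vec) => nrm d z (fst (proj1_sig i)) < rho d (proj1_sig i)).
  destruct (HK I U) as [li Hli].
  { intros i x Hx. unfold U in *. exists (rho d (proj1_sig i) - nrm d x (fst (proj1_sig i))).
    split; [lra|]. intros y Hy. pose proof (nrm_tri d x y (fst (proj1_sig i))).
    pose proof (nrm_le_dist d x y). lra. }
  { intros x Hx. destruct (Hf x Hx e He) as [dl [Hdl Hc]].
    exists (exist Good (x, dl) (conj Hx (conj Hdl Hc))). unfold U; simpl.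
    rewrite nrm_self. apply rho_pos; simpl; lra. }
  set (lq := map (@proj1_sig _ Good) li).
  assert (Glq : forall q, In q lq -> Good q).
  { intros q Hq. apply in_map_iff in Hq. destruct Hq as [i [<- _]]. apply proj2_sig. }
  assert (Cov : forall x, K x -> exists q, In q lq /\ nrm d x (fst q) < rho d q).
  { intros x Hx. destruct (Hli x Hx) as [i [Hi Ui]]. exists (proj1_sig i). split; auto.
    apply in_map; auto. }
  assert (Close : forall q x, Good q -> K x -> nrm d x (fst q) < 2 * rho d q -> Rabs (f (fst q) - f x) < e).
  { intros q x [Kq [Hq Hc]] Hx Hn. apply Hc; auto. apply dist_small; auto.
    unfold rho in Hn. pose proof (pos_INR d).
    replace (2 * (snd q / (2 * (INR d + 1)))) with (snd q / (INR d + 1)) in Hn by (field; lra). auto. }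
  destruct (list_bound (fun q B => forall x, nrm d x (fst q) < rho d q -> forall k, (k < d)%nat -> Rabs (x k) <= B) lq)
    as [Rc HRc].
  { intros q B B' HB P x Hx k Hk. specialize (P x Hx k Hk). lra. }
  { intros q Hq. exists (nrm d (fst q) (fun _ => 0) + rho d q). intros x Hx k Hk.
    pose proof (nrm_ge d x (fst q) k Hk). pose proof (nrm_ge d (fst q) (fun _ => 0) k Hk).
    replace (x k) with ((x k - fst q k) + (fst q k - 0)) by ring.
    eapply Rle_trans; [apply Rabs_triang|]. lra. }
  destruct (list_bound (fun q B => forall x, K x -> nrm d x (fst q) < rho d q -> Rabs (f x) <= B) lq)
    as [Bf HBf].
  { intros q B B' HB P x Kx Hx. specialize (P x Kx Hx). lra. }
  { intros q Hq. exists (Rabs (f (fst q)) + e). intros x Kx Hx.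
    pose proof (Close q x (Glq q Hq) Kx). pose proof (rho_pos d q (proj1 (proj2 (Glq q Hq)))).
    assert (Rabs (f (fst q) - f x) < e) by (apply H; lra).
    replace (f x) with (f (fst q) - (f (fst q) - f x)) by ring.
    eapply Rle_trans; [apply Rabs_triang|]. rewrite Rabs_Ropp. lra. }
  assert (HfB : forall x, K x -> Rabs (f x) <= Bf).
  { intros x Kx. destruct (Cov x Kx) as [q [Hq Hn]]. apply (HBf q Hq x Kx Hn). }
  assert (HR : forall x, K x -> forall k, (k < d)%nat -> Rabs (x k) <= Rc).
  { intros x Kx. destruct (Cov x Kx) as [q [Hq Hn]]. apply (HRc q Hq x Hn). }
  destruct (list_min_pos (rho d) lq) as [r [Hr Hrq]].
  { intros q Hq. apply rho_pos. apply (Glq q Hq). }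
  set (C := 2 * Rabs Bf / r + 1).
  assert (HC0 : 0 <= C). { unfold C. pose proof (Rabs_pos Bf).
    assert (0 <= 2 * Rabs Bf / r) by (apply Rmult_le_pos; [lra| left; apply Rinv_0_lt_compat; lra]). lra. }
  assert (HCr : 2 * Rabs Bf <= C * r). { unfold C. replace ((2 * Rabs Bf / r + 1) * r) with (2 * Rabs Bf + r) by (field; lra). lra. }
  set (B0 := - Rabs Bf - 1).
  destruct (realize d K Rc (Fl d f e C B0 lq) HR (DC_Fl d f e C B0 lq HC0)) as [N [HN EN]].
  exists N. split; auto. exists (2 * e). split. unfold e; lra.
  intros x Kx. rewrite EN by auto.
  pose proof (HfB x Kx) as Hfx. pose proof (Rabs_le_inv _ _ Hfx). pose proof (Rle_abs Bf).
  assert (Lo : f x - 2 * e <= Fl d f e C B0 lq x).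
  { destruct (Cov x Kx) as [q [Hq Hn]]. eapply Rle_trans; [|apply (Fl_ge _ _ _ _ _ _ q x Hq)].
    unfold phi. assert (Rmax 0 (nrm d x (fst q) - rho d q) = 0) by (unfold Rmax; destruct Rle_dec; lra).
    rewrite H1. pose proof (rho_pos d q (proj1 (proj2 (Glq q Hq)))).
    pose proof (Close q x (Glq q Hq) Kx ltac:(lra)). apply Rlt_le, Rabs_le_inv in H3. lra. }
  assert (Up : Fl d f e C B0 lq x <= f x).
  { apply Fl_le; [|unfold B0; lra]. intros q Hq. unfold phi.
    pose proof (Glq q Hq) as Gq. destruct Gq as [Kq [Hq0 _]].
    pose proof (rho_pos d q Hq0).
    destruct (Rlt_or_le (nrm d x (fst q)) (2 * rho d q)) as [Hlt|Hge].
    - pose proof (Close q x (Glq q Hq) Kx Hlt). apply Rlt_le, Rabs_le_inv in H2.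
      assert (0 <= C * Rmax 0 (nrm d x (fst q) - rho d q)) by (apply Rmult_le_pos; auto; apply Rmax_l). lra.
    - assert (r <= Rmax 0 (nrm d x (fst q) - rho d q)).
      { pose proof (Hrq q Hq). eapply Rle_trans; [|apply Rmax_r]. lra. }
      assert (C * r <= C * Rmax 0 (nrm d x (fst q) - rho d q)) by (apply Rmult_le_compat_l; auto).
      pose proof (Rabs_le_inv _ _ (HfB (fst q) Kq)). lra. }
  unfold Rabs; destruct Rcase_abs; lra.
Qed.
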